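(* Assume that at each bus either there is no generator or there are at least two generators ($n_i=0$ or $n_i\ge2$ for all $i$), and that the optimizer $x^*$ of the DC-OPF problem satisfies $x^*_n>0$ for all $n$. Then the inelastic electricity market game has a unique efficient Nash equilibrium $b^*$, given by $b^*_n=2a_nx^*_n+c_n$ for all $n$.
   Context: Network: a directed graph $\mathcal G=(\mathcal V,\mathcal E)$ with buses $\mathcal V=\{1,\dots,N_b\}$ and power lines $\mathcal E$; $\mathcal N_i^+=\{j:(i,j)\in\mathcal E\}$, $\mathcal N_i^-=\{j:(j,i)\in\mathcal E\}$. Each line $(i,j)$ carries flow $z_{ij}$ with limit $\bar z_{ij}>0$. There are $N$ generators; $G_i$ is the (possibly empty) set of generators at bus $i$, the $G_i$ partition $\{1,\dots,N\}$, $n_i=|G_i|$. Bus $i$ has load $y_i\ge0$. Generator $n$ has cost $f_n(x)=a_nx^2+c_nx$, $a_n>0$, $c_n\ge0$. DC-OPF: minimize $\sum_n f_n(x_n)$ s.t. $\sum_{j\in\mathcal N_i^+}z_{ij}-\sum_{j\in\mathcal N_i^-}z_{ji}=\sum_{n\in G_i}x_n-y_i$ for all $i$, $|z_{ij}|\le\bar z_{ij}$ for all $(i,j)\in\mathcal E$, $x\ge0$; assumed feasible with optimizer $(x^*,z^* )$, $x^*$ unique. S-DC-OPF given bids $b\ge0$: same constraints, objective $\sum_n b_nx_n$. Game: players are generators, actions bids $b_n\ge0$; given an optimizer $x^{\rm opt}(b)$ of S-DC-OPF chosen by the operator, payoff $u_n=b_nx^{\rm opt}_n(b)-f_n(x^{\rm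 opt}_n(b))$. Nash equilibrium: $b^*\ge0$ for which some optimizer $x^{\rm opt}(b^* )$ of S-DC-OPF$(b^* )$ satisfies, for all $n$, all $b_n\ge0$ and all optimizers $x^{\rm opt}(b_n,b^*_{-n})$ of S-DC-OPF$(b_n,b^*_{-n})$, $u_n(b_n,x^{\rm opt}_n(b_n,b^*_{-n}))\le u_n(b^*_n,x^{\rm opt}_n(b^* ))$. Efficient bid: $b^*\ge0$ such that $(x^*,z^* )$ optimizes S-DC-OPF$(b^* )$ and $x^*_n=\arg\max_{x\ge0}(b^*_nx-f_n(x))$ for all $n$. Efficient Nash equilibrium: an efficient bid that is a Nash equilibrium. *)

(* Defs.v *)
From HB Require Import structures.
From mathcomp Require Import all_boot all_order all_algebra.
Set Implicit Arguments. Unset Strict Implicit. Unset Printing Implicit Defensive.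
Import Order.TTheory GRing.Theory Num.Theory.
Local Open Scope ring_scope.

(* Network data:
   - buses are 'I_Nb;
   - E : {set 'I_Nb * 'I_Nb} is the set of (directed) lines (i,j);
   - a flow is z : 'I_Nb -> 'I_Nb -> R (only values z i j for (i,j) \in E matter);
   - zbar i j is the line limit of (i,j);
   - generators are 'I_N, loc n is the bus of generator n, so that
     G_i = [set n | loc n == i] (the G_i partition the generators);
   - y i is the load at bus i;
   - generator n has cost f_n(x) = a n * x^2 + c n * x. *)

Definition gen_set (Nb N : nat) (loc : 'I_N -> 'I_Nb) (i : 'I_Nb) : {set 'I_N} :=
  [set n | loc n == i].

Definition cost (R : realFieldType) (N : nat) (a c : 'I_N -> R) (n : 'I_N) (x : R) : R :=
  a n * x ^+ 2 + c n * x.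

Definition feasible (R : realFieldType) (Nb N : nat) (E : {set 'I_Nb * 'I_Nb})
    (zbar : 'I_Nb -> 'I_Nb -> R) (loc : 'I_N -> 'I_Nb) (y : 'I_Nb -> R)
    (x : 'I_N -> R) (z : 'I_Nb -> 'I_Nb -> R) : Prop :=
  (forall i : 'I_Nb,
      \sum_(j : 'I_Nb | (i, j) \in E) z i j - \sum_(j : 'I_Nb | (j, i) \in E) z j i
      = \sum_(n in gen_set loc i) x n - y i)
  /\ (forall i j : 'I_Nb, (i, j) \in E -> `|z i j| <= zbar i j)
  /\ (forall n : 'I_N, 0 <= x n).

Definition dcopf_opt (R : realFieldType) (Nb N : nat) (E : {set 'I_Nb * 'I_Nb})
    (zbar : 'I_Nb -> 'I_Nb -> R) (loc : 'I_N -> 'I_Nb) (y : 'I_Nb -> R)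
    (a c : 'I_N -> R) (x : 'I_N -> R) (z : 'I_Nb -> 'I_Nb -> R) : Prop :=
  feasible E zbar loc y x z /\
  forall x' z', feasible E zbar loc y x' z' ->
    \sum_(n < N) cost a c n (x n) <= \sum_(n < N) cost a c n (x' n).

Definition sdcopf_opt (R : realFieldType) (Nb N : nat) (E : {set 'I_Nb * 'I_Nb})
    (zbar : 'I_Nb -> 'I_Nb -> R) (loc : 'I_N -> 'I_Nb) (y : 'I_Nb -> R)
    (b : 'I_N -> R) (x : 'I_N -> R) (z : 'I_Nb -> 'I_Nb -> R) : Prop :=
  feasible E zbar loc y x z /\
  forall x' z', feasible E zbar loc y x' z' ->
    \sum_(n < N) b n * x n <= \sum_(n < N) b n * x' n.

Definition payoff (R : realFieldType) (N : nat) (a c : 'I_N -> R) (n : 'I_N) (bn xn : R) : R :=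
  bn * xn - cost a c n xn.

Definition upd_bid (R : realFieldType) (N : nat) (b : 'I_N -> R) (n : 'I_N) (bn : R) : 'I_N -> R :=
  fun m => if m == n then bn else b m.

Definition nonneg_bid (R : realFieldType) (N : nat) (b : 'I_N -> R) : Prop :=
  forall n, 0 <= b n.

Definition nash_eq (R : realFieldType) (Nb N : nat) (E : {set 'I_Nb * 'I_Nb})
    (zbar : 'I_Nb -> 'I_Nb -> R) (loc : 'I_N -> 'I_Nb) (y : 'I_Nb -> R)
    (a c : 'I_N -> R) (b : 'I_N -> R) : Prop :=
  nonneg_bid b /\
  exists (xo : 'I_N -> R) (zo : 'I_Nb -> 'I_Nb -> R),
    sdcopf_opt E zbar loc y b xo zo /\
    forall (n : 'I_N) (bn : R), 0 <= bn ->
      forall x' z', sdcopf_opt E zbar loc y (upd_bid b n bn) x' z' ->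
        payoff a c n bn (x' n) <= payoff a c n (b n) (xo n).

Definition efficient_bid (R : realFieldType) (Nb N : nat) (E : {set 'I_Nb * 'I_Nb})
    (zbar : 'I_Nb -> 'I_Nb -> R) (loc : 'I_N -> 'I_Nb) (y : 'I_Nb -> R)
    (a c : 'I_N -> R) (xs : 'I_N -> R) (zs : 'I_Nb -> 'I_Nb -> R) (b : 'I_N -> R) : Prop :=
  nonneg_bid b /\
  sdcopf_opt E zbar loc y b xs zs /\
  forall n : 'I_N, 0 <= xs n /\
    forall x : R, 0 <= x -> b n * x - cost a c n x <= b n * xs n - cost a c n (xs n).

Definition efficient_nash_eq (R : realFieldType) (Nb N : nat) (E : {set 'I_Nb * 'I_Nb})
    (zbar : 'I_Nb -> 'I_Nb -> R) (loc : 'I_N -> 'I_Nb) (y : 'I_Nb -> R)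
    (a c : 'I_N -> R) (xs : 'I_N -> R) (zs : 'I_Nb -> 'I_Nb -> R) (b : 'I_N -> R) : Prop :=
  efficient_bid E zbar loc y a c xs zs b /\ nash_eq E zbar loc y a c b.

(* Main.v *)
Require Import Defs.
From HB Require Import structures.
From mathcomp Require Import all_boot all_order all_algebra.
From mathcomp Require Import ring lra.
Set Implicit Arguments. Unset Strict Implicit. Unset Printing Implicit Defensive.
Import Order.TTheory GRing.Theory Num.Theory.
Local Open Scope ring_scope.

Lemma sum_delta (R : realFieldType) (I : finType) (P : pred I) (m : I) (d : R) :
  \sum_(k | P k) (if k == m then d else 0) = if P m then d else 0.
Proof.
rewrite -big_mkcondr /=; case: ifP => Pm.
  by rewrite (big_pred1 m) // => k /=; case: eqP => [->|]; rewrite ?Pm ?andbF.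
by rewrite big_pred0 // => k; case: eqP => [->|]; rewrite ?Pm ?andbF.
Qed.

Lemma sum_delta_mul (R : realFieldType) (I : finType) (P : pred I) (m : I) (d : R) (F : I -> R) :
  \sum_(k | P k) F k * (if k == m then d else 0) = if P m then F m * d else 0.
Proof.
rewrite -sum_delta; apply: eq_bigr => k _; case: eqP => [->|]; by rewrite ?mulr0.
Qed.

Definition shiftx (R : realFieldType) (N : nat) (x : 'I_N -> R) (n m : 'I_N) : 'I_N -> R :=
  fun k => x k + (if k == m then x n else 0) - (if k == n then x n else 0).

Lemma shift_feas (R : realFieldType) (Nb N : nat) (E : {set 'I_Nb * 'I_Nb})
    (zbar : 'I_Nb -> 'I_Nb -> R) (loc : 'I_N -> 'I_Nb) (y : 'I_Nb -> R)
    (x : 'I_N -> R) (z : 'I_Nb -> 'I_Nb -> R) (n m : 'I_N) :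
  feasible E zbar loc y x z -> loc n = loc m -> n != m ->
  feasible E zbar loc y (shiftx x n m) z.
Proof.
move=> [hf [hz hx]] hl hnm; split; [|split] => //.
  move=> i; rewrite hf /shiftx sumrB big_split /= !sum_delta /gen_set !inE hl.
  by case: (loc m == i) => /=; ring.
move=> k; rewrite /shiftx; case: (eqVneq k n) => [->|kn].
  by rewrite (negbTE hnm) addr0 subrr.
case: (k == m); rewrite subr0 ?addr0 //; apply: addr_ge0; exact: hx.
Qed.

Lemma shift_obj (R : realFieldType) (N : nat) (b x : 'I_N -> R) (n m : 'I_N) :
  \sum_(k < N) b k * shiftx x n m k =
  \sum_(k < N) b k * x k + b m * x n - b n * x n.
Proof.
rewrite /shiftx.
under eq_bigr => k _ do rewrite mulrBr mulrDr.
by rewrite sumrB big_split /= !sum_delta_mul.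
Qed.

Lemma feas_conv (R : realFieldType) (Nb N : nat) (E : {set 'I_Nb * 'I_Nb})
    (zbar : 'I_Nb -> 'I_Nb -> R) (loc : 'I_N -> 'I_Nb) (y : 'I_Nb -> R)
    (x x' : 'I_N -> R) (z z' : 'I_Nb -> 'I_Nb -> R) (t : R) :
  feasible E zbar loc y x z -> feasible E zbar loc y x' z' -> 0 <= t -> t <= 1 ->
  feasible E zbar loc y (fun k => (1 - t) * x k + t * x' k)
     (fun i j => (1 - t) * z i j + t * z' i j).
Proof.
move=> [f1 [z1 x1]] [f2 [z2 x2]] t0 t1; split; [|split].
- move=> i; rewrite !big_split /= -!mulr_sumr.
  have e1 := f1 i; have e2 := f2 i.
  move/eqP: e1; rewrite subr_eq => /eqP ->.
  move/eqP: e2; rewrite subr_eq => /eqP ->.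
  move: (\sum_(n in gen_set loc i) x n) (\sum_(n in gen_set loc i) x' n)
     (\sum_(j < Nb | (j, i) \in E) z j i) (\sum_(j < Nb | (j, i) \in E) z' j i) => A B C D.
  ring.
- move=> i j hij; have h1 := z1 _ _ hij; have h2 := z2 _ _ hij.
  apply: le_trans (ler_normD _ _) _.
  have ht1 : 0 <= 1 - t by lra.
  rewrite !normrM (ger0_norm ht1) (ger0_norm t0).
  have h3 : (1 - t) * `|z i j| <= (1 - t) * zbar i j by apply: ler_wpM2l.
  have h4 : t * `|z' i j| <= t * zbar i j by apply: ler_wpM2l.
  lra.
- move=> k; have := x1 k; have := x2 k.
  have ht1 : 0 <= 1 - t by lra.
  move=> h2 h1; apply: addr_ge0; exact: mulr_ge0.
Qed.

Lemma conv_lemma (R : realFieldType) (G H : R) :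
  (forall t, 0 < t -> t <= 1 -> 0 <= t * G + t ^+ 2 * H) -> 0 <= H -> 0 <= G.
Proof.
move=> k h0; rewrite leNgt; apply/negP => g0.
have hd : 0 < H - G by lra.
pose t := - G / (H - G).
have ht0 : 0 < t by rewrite /t divr_gt0 // oppr_gt0.
have ht1 : t <= 1 by rewrite /t ler_pdivrMr // mul1r; lra.
have ht : (H - G) * t = - G by rewrite /t mulrC divfK // lt0r_neq0.
clearbody t.
have e : (H - G) * (t * G + t ^+ 2 * H) = - (t * G ^+ 2).
  have -> : (H - G) * (t * G + t ^+ 2 * H) = t * ((H - G) * G + H * ((H - G) * t)) by ring.
  rewrite ht; ring.
have := mulr_ge0 (ltW hd) (k t ht0 ht1); rewrite e.
have : 0 < t * G ^+ 2 by apply: mulr_gt0 => //; rewrite expr2; nra.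
lra.
Qed.

Lemma foc (R : realFieldType) (A C X B : R) : 0 < A -> 0 < X ->
  (forall x, 0 <= x -> B * x - (A * x ^+ 2 + C * x) <= B * X - (A * X ^+ 2 + C * X)) ->
  B = 2 * A * X + C.
Proof.
move=> hA hX hm; set u := B - C - 2 * A * X.
have hp : forall t, - X <= t -> u * t - A * t ^+ 2 <= 0.
  move=> t ht; have := hm (X + t) ltac:(lra).
  have e : B * (X + t) - (A * (X + t) ^+ 2 + C * (X + t)) - (B * X - (A * X ^+ 2 + C * X))
     = u * t - A * t ^+ 2 by rewrite /u; ring.
  lra.
have hA0 : A != 0 by exact: lt0r_neq0.
case: (ltrgtP u 0) => hu.
- have [e [e0 [eX eu]]] : exists e, 0 < e /\ e <= X /\ A * e < - u.
    case: (ltrP (A * X) (- u)) => h; first by exists X; split.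
    exists (- u / (2 * A)); have hAe : A * (- u / (2 * A)) = - u / 2 by field.
    split; first by apply: divr_gt0; lra.
    split; last by lra.
    rewrite ler_pdivrMr; lra.
  have := hp (- e) ltac:(lra).
  have -> : u * - e - A * (- e) ^+ 2 = e * (- u - A * e) by ring.
  have : 0 < e * (- u - A * e) by apply: mulr_gt0; lra.
  lra.
- have ht : 0 < u / (2 * A) by apply: divr_gt0; lra.
  have := hp (u / (2 * A)) ltac:(lra).
  have -> : u * (u / (2 * A)) - A * (u / (2 * A)) ^+ 2 = (u / (2 * A)) * (u / 2) by field.
  have : 0 < (u / (2 * A)) * (u / 2) by apply: mulr_gt0; lra.
  lra.
- rewrite /u in hu; lra.
Qed.

Theorem corollary3p3 (R : realFieldType) (Nb N : nat)
    (E : {set 'I_Nb * 'I_Nb}) (zbar : 'I_Nb -> 'I_Nb -> R)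
    (loc : 'I_N -> 'I_Nb) (y : 'I_Nb -> R) (a c : 'I_N -> R)
    (xs : 'I_N -> R) (zs : 'I_Nb -> 'I_Nb -> R)
    (hzbar : forall i j : 'I_Nb, (i, j) \in E -> 0 < zbar i j)
    (hy : forall i : 'I_Nb, 0 <= y i)
    (ha : forall n : 'I_N, 0 < a n)
    (hc : forall n : 'I_N, 0 <= c n)
    (hopt : dcopf_opt E zbar loc y a c xs zs)
    (huniq : forall x z, dcopf_opt E zbar loc y a c x z -> forall n, x n = xs n)
    (hbus : forall i : 'I_Nb, #|gen_set loc i| = 0%N \/ (2 <= #|gen_set loc i|)%N)
    (hpos : forall n : 'I_N, 0 < xs n) :
  efficient_nash_eq E zbar loc y a c xs zs (fun n => 2 * a n * xs n + c n) /\
  forall b : 'I_N -> R, efficient_nash_eq E zbar loc y a c xs zs b ->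
    forall n : 'I_N, b n = 2 * a n * xs n + c n.
Proof.
pose bs := fun n => 2 * a n * xs n + c n.
have bs_nn : nonneg_bid bs.
  move=> n; rewrite /bs; have := ha n; have := hpos n; have := hc n; nra.
case: hopt => hfeas hmin.
have hLP : sdcopf_opt E zbar loc y bs xs zs.
  split => // x' z' hf'.
  rewrite -subr_ge0.
  set G := _ - _.
  set H := \sum_(n < N) a n * (x' n - xs n) ^+ 2.
  have H0 : 0 <= H.
    by apply: sumr_ge0 => n _; apply: mulr_ge0; [exact: ltW | exact: sqr_ge0].
  apply: (conv_lemma _ H0) => t t0 t1.
  have hft := feas_conv hfeas hf' (ltW t0) t1.
  have := hmin _ _ hft.
  have -> : \sum_(n < N) cost a c n ((1 - t) * xs n + t * x' n) =
            \sum_(n < N) cost a c n (xs n) + t * G + t ^+ 2 * H.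
    rewrite /G /H mulrBr !mulr_sumr -sumrB -!big_split /=.
    by apply: eq_bigr => n _; rewrite /cost /bs; ring.
  lra.
split.
  split; first split => //.
    split => // n; split; first exact: ltW.
    move=> x hx; rewrite /cost.
    have := mulr_ge0 (ltW (ha n)) (sqr_ge0 (x - xs n)); nra.
  split => //; exists xs, zs; split => // n bn hbn x' z' [hf' hmin'].
  have x'0 : 0 <= x' n by case: hf' => _ [_]; apply.
  suff hb : bn * x' n <= bs n * x' n.
    rewrite /payoff /cost; rewrite /bs in hb.
    have := mulr_ge0 (ltW (ha n)) (sqr_ge0 (x' n - xs n)); nra.
  case: (lerP bn (bs n)) => hbn'; first exact: ler_wpM2r.
  have [m hm hmn] : exists2 m, loc m = loc n & m != n.
    have hn : n \in gen_set loc (loc n) by rewrite /gen_set inE.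
    case: (hbus (loc n)) => hc'.
      by have := card0_eq hc' n; rewrite hn.
    rewrite (cardsD1 n) hn in hc'.
    have : (0 < #|gen_set loc (loc n) :\ n|)%N by rewrite add1n ltnS in hc'.
    case/card_gt0P => m; rewrite /gen_set !inE => /andP [hmn /eqP hm].
    by exists m.
  have h1 : bs m <= bs n.
    have := (hLP.2 _ _ (shift_feas hfeas hm hmn)); rewrite shift_obj => h.
    have : bs m * xs m <= bs n * xs m by lra.
    by rewrite ler_pM2r.
  have h2 : bn * x' n <= bs m * x' n.
    have hnm : n != m by rewrite eq_sym.
    have := hmin' _ _ (shift_feas hf' (esym hm) hnm).
    rewrite shift_obj /upd_bid (negbTE hmn) eqxx => h.
    rewrite /bs; lra.
  apply: le_trans h2 _; exact: ler_wpM2r.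
move=> b [[bnn [hLPb hmax]] _] n.
have [_ hm] := hmax n.
exact: foc (ha n) (hpos n) hm.
Qed.
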